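(* Let $n\ge 2$, let $\gamma: I\to S^n$ be a spherical unit speed curve, let $P\in S^n$ and let $s_0\in I$. Then: (1) If $P\neq \pm\mathbf{u}_n(s_0)$, then the spherical pedal curve-germ $ped_{\gamma,P}:(I,s_0)\to S^n$ is well-defined and the spherical orthotomic curve-germ $ort_{\gamma,P}:(I,s_0)\to S^n$ is $\mathcal{L}$-equivalent to it. (If $P=\pm\mathbf{u}_n(s_0)$, the germ $ped_{\gamma,P}$ at $s_0$ is not defined.) (2) If $P=\pm\mathbf{u}_n(s_0)$, then $ort_{\gamma,P}:(I,s_0)\to S^n$ is $\mathcal{L}$-equivalent to the spherical dual curve-germ $\mathbf{u}_n:(I,s_0)\to S^n$.
   Context: $I\subset\mathbb{R}$ is an open interval and $S^n$ the unit sphere in $\mathbb{R}^{n+1}$; the dot denotes the Euclidean inner product. A regular curve $\gamma:I\to S^n$ is a spherical unit speed curve if, setting $\mathbf{u}_{-1}\equiv\mathbf{0}$, $\mathbf{u}_0=\gamma$, $\|\mathbf{u}_0'\|\equiv 1$, $\kappa_0\equiv 0$, the maps $\mathbf{u}_i(s)=\dfrac{\mathbf{u}_{i-1}'(s)+\kappa_{i-1}(s)\mathbf{u}_{i-2}(s)}{\|\mathbf{u}_{i-1}'(s)+\kappa_{i-1}(s)\mathbf{u}_{i-2}(s)\|}$ with $\kappa_i(s)=\|\mathbf{u}_{i-1}'(s)+\kappa_{i-1}(s)\mathbf{u}_{i-2}(s)\|>0$ are well-defined for $1\le i\le n-1$ and all $s\in I$. Then $\mathbf{u}_0(s),\dots,\mathbf{u}_{n-1}(s)$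 are orthonormal, and the spherical dual curve $\mathbf{u}_n:I\to S^n$ is defined by requiring $\mathbf{u}_0(s),\dots,\mathbf{u}_n(s)$ orthonormal with $\det(\mathbf{u}_0(s),\dots,\mathbf{u}_n(s))=1$; also $\kappa_n(s)=\mathbf{u}_{n-1}'(s)\cdot\mathbf{u}_n(s)$. For $P\in S^n$ with $P\cdot\mathbf{u}_n(s)\neq\pm1$, the spherical pedal curve is $ped_{\gamma,P}(s)=\dfrac{P-(P\cdot\mathbf{u}_n(s))\mathbf{u}_n(s)}{\sqrt{1-(P\cdot\mathbf{u}_n(s))^2}}$ (equivalently the normalization of $\sum_{i=0}^{n-1}(P\cdot\mathbf{u}_i(s))\mathbf{u}_i(s)$). For any $P\in S^n$ the spherical orthotomic curve is $ort_{\gamma,P}(s)=\sum_{i=0}^{n-1}(P\cdot\mathbf{u}_i(s))\mathbf{u}_i(s)-(P\cdot\mathbf{u}_n(s))\mathbf{u}_n(s)=P-2(P\cdot\mathbf{u}_n(s))\mathbf{u}_n(s)$. Two curve-germs $f,g:(I,s_0)\to S^n$ are $\mathcal{L}$-equivalent if there is a germ of $C^\infty$ diffeomorphism $\psi:(S^n,f(s_0))\to(S^n,g(s_0))$ with $g=\psi\circ f$ as germs. *)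

(* Defs.v *)
From Stdlib Require Import Reals Lra Lia List.
Open Scope R_scope.

(* Vectors of R^N are represented as functions nat -> R; only the
   coordinates 0 .. N-1 are meaningful. *)
Definition vec := nat -> R.

Fixpoint sumN (k : nat) (f : nat -> R) : R :=
  match k with O => 0 | S k' => sumN k' f + f k' end.

Definition dot (N : nat) (x y : vec) : R := sumN N (fun k => x k * y k).
Definition vnorm (N : nat) (x : vec) : R := sqrt (dot N x x).
Definition vzero : vec := fun _ => 0.
Definition vadd (x y : vec) : vec := fun k => x k + y k.
Definition vscale (a : R) (x : vec) : vec := fun k => a * x k.
Definition vopp (x : vec) : vec := vscale (-1) x.
Definition vsub (x y : vec) : vec := fun k => x k - y k.
Definition veq (N : nat) (x y : vec) : Prop := forall k, (k < N)%nat -> x k = y k.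
Definition vdist (N : nat) (x y : vec) : R := vnorm N (vsub x y).
Definition ebasis (i : nat) : vec := fun k => if Nat.eqb k i then 1 else 0.

Definition on_sphere (N : nat) (x : vec) : Prop := dot N x x = 1.

Definition ball (N : nat) (a : vec) (r : R) (x : vec) : Prop := vdist N x a < r.

Fixpoint det (k : nat) (M : nat -> nat -> R) : R :=
  match k with
  | O => 1
  | S k' => sumN (S k') (fun j =>
        (-1) ^ j * M O j * det k' (fun r c => M (S r) (if Nat.ltb c j then c else S c)))
  end.

Definition is_open_interval (I : R -> Prop) : Prop :=
  (exists x, I x) /\
  (forall x y z, I x -> I z -> x <= y <= z -> I y) /\
  (forall x, I x -> exists eps, eps > 0 /\ forall y, Rabs (y - x) < eps -> I y).

Definition smooth_fun_on (I : R -> Prop) (f : R -> R) : Prop :=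
  exists ds : nat -> R -> R,
    (forall s, I s -> ds O s = f s) /\
    (forall k s, I s -> derivable_pt_lim (ds k) s (ds (S k) s)).

Definition smooth_curve (N : nat) (I : R -> Prop) (c : R -> vec) : Prop :=
  forall k, (k < N)%nat -> smooth_fun_on I (fun s => c s k).

Definition vderiv (N : nat) (c : R -> vec) (s : R) (d : vec) : Prop :=
  forall k, (k < N)%nat -> derivable_pt_lim (fun t => c t k) s (d k).

(* C^infinity real function on an open set U of R^N: all iterated partial
   derivatives D l (l = list of directions) exist on U and are continuous. *)
Definition smooth_map_on (N : nat) (U : vec -> Prop) (h : vec -> R) : Prop :=
  exists D : list nat -> vec -> R,
    (forall x, U x -> D nil x = h x) /\
    (forall l i x, (i < N)%nat -> U x ->
        derivable_pt_lim (fun t => D l (vadd x (vscale t (ebasis i)))) 0 (D (i :: l) x)) /\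
    (forall l x, U x -> forall e, e > 0 -> exists d, d > 0 /\
        forall y, U y -> vdist N y x < d -> Rabs (D l y - D l x) < e).

Definition smooth_vmap_on (N : nat) (U : vec -> Prop) (h : vec -> vec) : Prop :=
  forall k, (k < N)%nat -> smooth_map_on N U (fun x => h x k).

(* psi is (a representative of) a germ of C^infinity diffeomorphism
   (S^{N-1}, a) -> (S^{N-1}, b): S^{N-1} is a submanifold of R^N, so smooth
   maps on it near a point are restrictions of smooth ambient maps. *)
Definition sphere_diffeo_germ (N : nat) (a b : vec) (psi : vec -> vec) : Prop :=
  exists (phi : vec -> vec) (r1 r2 : R),
    r1 > 0 /\ r2 > 0 /\
    smooth_vmap_on N (ball N a r1) psi /\
    smooth_vmap_on N (ball N b r2) phi /\
    veq N (psi a) b /\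
    (forall x, on_sphere N x -> ball N a r1 x ->
        on_sphere N (psi x) /\ veq N (phi (psi x)) x) /\
    (forall y, on_sphere N y -> ball N b r2 y ->
        on_sphere N (phi y) /\ veq N (psi (phi y)) y).

Definition L_equiv (N : nat) (I : R -> Prop) (s0 : R) (f g : R -> vec) : Prop :=
  exists psi : vec -> vec,
    sphere_diffeo_germ N (f s0) (g s0) psi /\
    exists eps, eps > 0 /\
      forall s, I s -> Rabs (s - s0) < eps -> veq N (g s) (psi (f s)).

(* u_{i-2}, with the convention u_{-1} = 0 *)
Definition u_m2 (u : nat -> R -> vec) (i : nat) (s : R) : vec :=
  match i with S (S j) => u j s | _ => vzero end.

Definition spherical_frame (n : nat) (I : R -> Prop) (gamma : R -> vec)
    (u : nat -> R -> vec) (kappa : nat -> R -> R) : Prop :=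
  (forall s, I s -> veq (S n) (u O s) (gamma s)) /\
  (forall s, I s -> kappa O s = 0) /\
  (forall s, I s -> exists d, vderiv (S n) gamma s d /\ vnorm (S n) d = 1) /\
  (forall i s, (1 <= i <= n - 1)%nat -> I s ->
     exists d, vderiv (S n) (u (i - 1)%nat) s d /\
       let w := vadd d (vscale (kappa (i - 1)%nat s) (u_m2 u i s)) in
       kappa i s = vnorm (S n) w /\ kappa i s > 0 /\
       veq (S n) (u i s) (vscale (/ kappa i s) w)) /\
  (forall s, I s ->
     (forall i j, (i <= n)%nat -> (j <= n)%nat ->
        dot (S n) (u i s) (u j s) = if Nat.eqb i j then 1 else 0) /\
     det (S n) (fun r c => u c s r) = 1).

Definition pedal (N : nat) (un : R -> vec) (P : vec) (s : R) : vec :=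
  vscale (/ sqrt (1 - (dot N P (un s)) ^ 2))
         (vsub P (vscale (dot N P (un s)) (un s))).

Definition orthotomic (N : nat) (un : R -> vec) (P : vec) (s : R) : vec :=
  vsub P (vscale (2 * dot N P (un s)) (un s)).

(* Main.v *)
Require Import Defs.
From Stdlib Require Import Reals Lra Lia FunctionalExtensionality List.
Import ListNotations.
Open Scope R_scope.

Lemma cont_eps f x : continuity_pt f x -> forall e, e > 0 ->
  exists d, d > 0 /\ forall y, Rabs (y - x) < d -> Rabs (f y - f x) < e.
Proof.
  intros H e He. destruct (H e He) as [d [Hd Hf]]. exists d; split; auto.
  intros y Hy. destruct (Req_dec y x) as [->|Hne].
  - unfold Rminus; rewrite Rplus_opp_r, Rabs_R0; lra.
  - apply (Hf y). split. split. exact I. auto. exact Hy.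
Qed.

Fixpoint Ck (I : R -> Prop) (m : nat) (f : R -> R) : Prop :=
  match m with
  | O => True
  | S m' => exists f', (forall s, I s -> derivable_pt_lim f s (f' s)) /\ Ck I m' f'
  end.

Section CkSec.
Variable I : R -> Prop.
Hypothesis Iopen : forall x, I x -> exists eps, eps > 0 /\ forall y, Rabs (y - x) < eps -> I y.

Lemma deriv_ext f g s l : I s -> (forall t, I t -> f t = g t) ->
  derivable_pt_lim f s l -> derivable_pt_lim g s l.
Proof.
  intros Hs Hfg H eps He. destruct (H eps He) as [d Hd].
  destruct (Iopen s Hs) as [r [Hr Hy]].
  assert (Hm : 0 < Rmin d r) by (apply Rmin_pos; [apply cond_pos|lra]).
  exists (mkposreal _ Hm). intros h Hh Hlt. simpl in Hlt.
  rewrite <- !Hfg; auto.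
  - apply Hd; auto. eapply Rlt_le_trans; [exact Hlt|apply Rmin_l].
  - apply Hy. replace (s + h - s) with h by ring.
    eapply Rlt_le_trans; [exact Hlt|apply Rmin_r].
Qed.

Lemma Ck_ext m f g : (forall t, I t -> f t = g t) -> Ck I m f -> Ck I m g.
Proof.
  destruct m as [|m]; simpl; auto.
  intros Hfg [f' [Hd Hc]]. exists f'. split; auto.
  intros s Hs. eapply deriv_ext; eauto.
Qed.

Lemma Ck_mono m f : Ck I (S m) f -> Ck I m f.
Proof.
  revert f; induction m as [|m IH]; intros f; simpl; auto.
  intros [f' [Hd Hc]]. exists f'. split; auto.
Qed.

Lemma Ck_const m c : Ck I m (fun _ => c).
Proof.
  revert c; induction m as [|m IH]; intros c; simpl; auto.
  exists (fun _ => 0). split; auto.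
  intros s _. apply (derivable_pt_lim_const c).
Qed.

Lemma Ck_plus m f g : Ck I m f -> Ck I m g -> Ck I m (fun s => f s + g s).
Proof.
  revert f g; induction m as [|m IH]; intros f g; simpl; auto.
  intros [f' [Hf Hf']] [g' [Hg Hg']].
  exists (fun s => f' s + g' s). split; auto.
  intros s Hs. apply (derivable_pt_lim_plus f g); auto.
Qed.

Lemma Ck_mult m f g : Ck I m f -> Ck I m g -> Ck I m (fun s => f s * g s).
Proof.
  revert f g; induction m as [|m IH]; intros f g; simpl; auto.
  intros Hf0 Hg0.
  assert (Hfm : Ck I m f) by (apply (Ck_mono m f Hf0)).
  assert (Hgm : Ck I m g) by (apply (Ck_mono m g Hg0)).
  destruct Hf0 as [f' [Hf Hf']]. destruct Hg0 as [g' [Hg Hg']].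
  exists (fun s => f' s * g s + f s * g' s). split.
  - intros s Hs. apply (derivable_pt_lim_mult f g); auto.
  - apply Ck_plus; apply IH; auto.
Qed.

Lemma Ck_inv m f : (forall s, I s -> f s <> 0) -> Ck I m f -> Ck I m (fun s => / f s).
Proof.
  intros Hnz. revert f Hnz; induction m as [|m IH]; intros f Hnz; simpl; auto.
  intros Hf0.
  assert (Hfm : Ck I m f) by (apply (Ck_mono m f Hf0)).
  destruct Hf0 as [f' [Hf Hf']].
  exists (fun s => (-1) * f' s * (/ f s * / f s)). split.
  - intros s Hs.
    assert (H := derivable_pt_lim_div (fun _ => 1) f s 0 (f' s)
                   (derivable_pt_lim_const 1 s) (Hf s Hs) (Hnz s Hs)).
    replace ((-1) * f' s * (/ f s * / f s)) with ((0 * f s - f' s * 1) / (f s)²).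
    + eapply deriv_ext; [exact Hs| |exact H]. intros t _. unfold div_fct, Rdiv. ring.
    + unfold Rsqr; field; auto.
  - apply Ck_mult; [apply Ck_mult; auto; apply Ck_const|].
    apply Ck_mult; apply IH; auto.
Qed.

Lemma Ck_sqrt m f : (forall s, I s -> f s > 0) -> Ck I m f -> Ck I m (fun s => sqrt (f s)).
Proof.
  intros Hp. revert f Hp; induction m as [|m IH]; intros f Hp; simpl; auto.
  intros Hf0.
  assert (Hfm : Ck I m f) by (apply (Ck_mono m f Hf0)).
  destruct Hf0 as [f' [Hf Hf']].
  exists (fun s => f' s * (/ 2 * / sqrt (f s))). split.
  - intros s Hs.
    assert (H := derivable_pt_lim_comp f sqrt s (f' s) _ (Hf s Hs)
                   (derivable_pt_lim_sqrt _ (Hp s Hs))).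
    assert (Hq : sqrt (f s) > 0) by (apply sqrt_lt_R0; apply Hp; auto).
    replace (f' s * (/ 2 * / sqrt (f s))) with (/ (2 * sqrt (f s)) * f' s).
    + exact H.
    + field. lra.
  - apply Ck_mult; auto. apply Ck_mult; [apply Ck_const|].
    apply Ck_inv; auto. intros s Hs. apply Rgt_not_eq, sqrt_lt_R0, Hp; auto.
Qed.

Lemma Ck_sum m N (F : nat -> R -> R) : (forall k, (k < N)%nat -> Ck I m (F k)) ->
  Ck I m (fun s => sumN N (fun k => F k s)).
Proof.
  induction N as [|N IH]; intros HF; simpl.
  - apply Ck_const.
  - apply Ck_plus; auto.
Qed.

Lemma smooth_Ck f : smooth_fun_on I f -> forall m, Ck I m f.
Proof.
  intros [ds [H0 Hd]] m.
  assert (Hall : forall m j, Ck I m (ds j)).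
  { induction m0 as [|m0 IH]; intros j; simpl; auto.
    exists (ds (S j)). split; auto. }
  apply (Ck_ext m (ds O)); auto.
Qed.

Lemma Ck_cont m f s : Ck I (S m) f -> I s -> continuity_pt f s.
Proof.
  intros [f' [Hd _]] Hs. apply derivable_continuous_pt.
  exists (f' s). apply Hd; auto.
Qed.
End CkSec.

Lemma sumN_ext N f g : (forall k, (k < N)%nat -> f k = g k) -> sumN N f = sumN N g.
Proof.
  induction N as [|N IH]; intros H; simpl; auto.
  rewrite IH, H; auto.
Qed.

Definition Iopen (I : R -> Prop) := forall x, I x -> exists eps, eps > 0 /\ forall y, Rabs (y - x) < eps -> I y.

Lemma frame_Ck n I gamma u kappa : (2 <= n)%nat -> Iopen I -> smooth_curve (S n) I gamma ->
  spherical_frame n I gamma u kappa ->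
  forall j, (j <= n - 1)%nat ->
   (forall k, (k < S n)%nat -> forall m, Ck I m (fun s => u j s k)) /\ (forall m, Ck I m (kappa j)).
Proof.
  intros Hn HI Hg [H0 [Hk0 [_ [Hfr _]]]].
  assert (Q : forall j j', (j' <= j)%nat -> (j' <= n - 1)%nat ->
   (forall k, (k < S n)%nat -> forall m, Ck I m (fun s => u j' s k)) /\ (forall m, Ck I m (kappa j'))).
  2: { intros j Hj; apply (Q j); auto. }
  induction j as [|j IH]; intros j' Hj' Hjn.
  - assert (j' = O) by lia. subst j'. split.
    + intros k Hk m. apply (Ck_ext I HI m (fun s => gamma s k)).
      * intros t Ht. symmetry; apply H0; auto.
      * apply smooth_Ck; auto.
    + intros m. apply (Ck_ext I HI m (fun _ => 0)); [intros t Ht; symmetry; auto|apply Ck_const].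
  - destruct (Nat.le_gt_cases j' j) as [Hle|Hgt]; [apply IH; auto|].
    assert (j' = S j) by lia. subst j'.
    destruct (IH j (le_n j) ltac:(lia)) as [IHu IHk].
    assert (Hm2 : forall k, (k < S n)%nat -> forall m, Ck I m (fun s => u_m2 u (S j) s k)).
    { intros k Hk m. destruct j as [|j2].
      - simpl. apply Ck_const.
      - simpl. apply (IH j2); auto; lia. }
    set (W := fun k s => kappa (S j) s * u (S j) s k).
    assert (HW : forall k, (k < S n)%nat -> forall m, Ck I m (W k)).
    { intros k Hk m.
      destruct (IHu k Hk (S m)) as [f' [Hf' Hf'c]].
      apply (Ck_ext I HI m (fun s => f' s + kappa j s * u_m2 u (S j) s k)).
      - intros s Hs. destruct (Hfr (S j) s ltac:(lia) Hs) as [d [Hd [Hkap [Hpos Hu]]]].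
        simpl in Hd. rewrite Nat.sub_0_r in Hd.
        assert (E : d k = f' s) by (eapply uniqueness_limite; [apply Hd; auto|apply Hf'; auto]).
        unfold W. rewrite (Hu k Hk). unfold vscale, vadd. simpl. rewrite Nat.sub_0_r, E.
        field. lra.
      - apply Ck_plus; auto. apply Ck_mult; auto. }
    assert (HK : forall m, Ck I m (kappa (S j))).
    { intros m. apply (Ck_ext I HI m (fun s => sqrt (sumN (S n) (fun k => W k s * W k s)))).
      - intros s Hs. destruct (Hfr (S j) s ltac:(lia) Hs) as [d [Hd [Hkap [Hpos Hu]]]].
        rewrite Hkap. unfold vnorm, dot. f_equal. apply sumN_ext. intros k Hk.
        unfold W. rewrite (Hu k Hk). unfold vscale. field. lra.
      - apply Ck_sqrt; auto.
        + intros s Hs. destruct (Hfr (S j) s ltac:(lia) Hs) as [d [Hd [Hkap [Hpos Hu]]]].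
          destruct (Rle_or_lt (sumN (S n) (fun k => W k s * W k s)) 0) as [Hl|Hl]; auto.
          exfalso. pose proof Hpos as Hpos'. rewrite Hkap in Hpos. unfold vnorm, dot in Hpos.
          rewrite (sumN_ext _ _ (fun k => W k s * W k s)) in Hpos.
          * rewrite sqrt_neg_0 in Hpos; auto; lra.
          * intros k Hk. unfold W. rewrite (Hu k Hk). unfold vscale. field. lra.
        + apply Ck_sum. intros k Hk. apply Ck_mult; auto. }
    split; auto.
    intros k Hk m. apply (Ck_ext I HI m (fun s => W k s * / kappa (S j) s)).
    + intros s Hs. destruct (Hfr (S j) s ltac:(lia) Hs) as [d [Hd [Hkap [Hpos Hu]]]].
      unfold W. field. lra.
    + apply Ck_mult; auto. apply Ck_inv; auto.
      intros s Hs. destruct (Hfr (S j) s ltac:(lia) Hs) as [d [Hd [Hkap [Hpos Hu]]]]. lra.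
Qed.

Lemma cont_const c x : continuity_pt (fun _ => c) x.
Proof. apply continuity_pt_const. intros a b; reflexivity. Qed.

Lemma sumN_cont N (F : nat -> R -> R) x : (forall k, (k < N)%nat -> continuity_pt (F k) x) ->
  continuity_pt (fun s => sumN N (fun k => F k s)) x.
Proof.
  induction N as [|N IH]; intros H; simpl.
  - apply cont_const.
  - apply (continuity_pt_plus (fun s => sumN N (fun k => F k s)) (F N)); auto.
Qed.

Lemma det_cont m (M : R -> nat -> nat -> R) x :
  (forall r c, (r < m)%nat -> (c < m)%nat -> continuity_pt (fun s => M s r c) x) ->
  continuity_pt (fun s => det m (M s)) x.
Proof.
  revert M; induction m as [|m IH]; intros M H.
  - apply (cont_const 1).
  - change (continuity_pt (fun s => sumN (S m) (fun j => (-1) ^ j * M s O j *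
        det m (fun r c => M s (S r) (if Nat.ltb c j then c else S c)))) x).
    apply sumN_cont. intros j Hj.
    apply (continuity_pt_mult (fun s => (-1) ^ j * M s O j)
       (fun s => det m (fun r c => M s (S r) (if Nat.ltb c j then c else S c)))).
    + apply (continuity_pt_mult (fun _ => (-1) ^ j) (fun s => M s O j)).
      * apply cont_const.
      * apply H; lia.
    + apply (IH (fun s r c => M s (S r) (if Nat.ltb c j then c else S c))).
      intros r c Hr Hc. apply H; [lia|]. destruct (Nat.ltb c j); lia.
Qed.

Lemma c_cont n I gamma u kappa (P : vec) s0 : (2 <= n)%nat -> Iopen I -> smooth_curve (S n) I gamma ->
  spherical_frame n I gamma u kappa -> I s0 ->
  (forall s, I s -> forall k, (k <= n)%nat ->
      u n s k = (-1) ^ (k + n) * det n (fun r c => u c s (if Nat.ltb r k then r else S r))) ->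
  exists g, continuity_pt g s0 /\ forall s, I s -> g s = dot (S n) P (u n s).
Proof.
  intros Hn HI Hg Hfr Hs0 FL.
  exists (fun s => sumN (S n) (fun k => P k * ((-1) ^ (k + n) *
      det n (fun r c => u c s (if Nat.ltb r k then r else S r))))).
  split.
  - apply (sumN_cont (S n) (fun k s => P k * ((-1) ^ (k + n) *
      det n (fun r c => u c s (if Nat.ltb r k then r else S r))))).
    intros k Hk.
    apply (continuity_pt_mult (fun _ => P k)); [apply cont_const|].
    apply (continuity_pt_mult (fun _ => (-1) ^ (k + n))); [apply cont_const|].
    apply (det_cont n (fun s r c => u c s (if Nat.ltb r k then r else S r))).
    intros r c Hr Hc.
    destruct (frame_Ck n I gamma u kappa Hn HI Hg Hfr c ltac:(lia)) as [Hu _].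
    apply (Ck_cont I O); auto. apply Hu. destruct (Nat.ltb r k); lia.
  - intros s Hs. unfold dot. apply sumN_ext. intros k Hk. rewrite FL; auto. lia.
Qed.


Inductive ex : Type :=
  | EC (c : R) | EV (i : nat) | EA (a b : ex) | EM (a b : ex) | EIS (a : ex).

Fixpoint ev (e : ex) (x : vec) : R :=
  match e with
  | EC c => c
  | EV i => x i
  | EA a b => ev a x + ev b x
  | EM a b => ev a x * ev b x
  | EIS a => / sqrt (ev a x)
  end.

Fixpoint dx (i : nat) (e : ex) : ex :=
  match e with
  | EC _ => EC 0
  | EV k => EC (if Nat.eqb k i then 1 else 0)
  | EA a b => EA (dx i a) (dx i b)
  | EM a b => EA (EM (dx i a) b) (EM a (dx i b))
  | EIS a => EM (EM (EC (-1/2)) (dx i a)) (EM (EIS a) (EM (EIS a) (EIS a)))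
  end.

Fixpoint okx (N : nat) (e : ex) (x : vec) : Prop :=
  match e with
  | EC _ => True
  | EV i => (i < N)%nat
  | EA a b => okx N a x /\ okx N b x
  | EM a b => okx N a x /\ okx N b x
  | EIS a => okx N a x /\ ev a x > 0
  end.

Fixpoint dxl (l : list nat) (e : ex) : ex :=
  match l with nil => e | i :: l' => dx i (dxl l' e) end.

Lemma okx_dx N i e x : okx N e x -> okx N (dx i e) x.
Proof.
  induction e; simpl; intuition.
Qed.

Lemma okx_dxl N l e x : okx N e x -> okx N (dxl l e) x.
Proof. induction l; simpl; auto. intros H; apply okx_dx; auto. Qed.

Lemma line0 (x b : vec) : vadd x (vscale 0 b) = x.
Proof. apply functional_extensionality; intros k; unfold vadd, vscale; ring. Qed.

Lemma dlin a b : derivable_pt_lim (fun t => a + t * b) 0 b.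
Proof.
  assert (H := derivable_pt_lim_plus (fct_cte a) (fun y => id y * b) 0 0 (1 * b)
     (derivable_pt_lim_const a 0) (derivable_pt_lim_scal_right id 0 1 b (derivable_pt_lim_id 0))).
  assert (E : 0 + 1 * b = b) by ring. rewrite E in H. exact H.
Qed.

Lemma dinvsqrt y : y > 0 -> derivable_pt_lim (fun t => / sqrt t) y (-1/2 * (/ sqrt y * (/ sqrt y * / sqrt y))).
Proof.
  intros Hy. assert (Hs : sqrt y > 0) by (apply sqrt_lt_R0; auto).
  assert (H := derivable_pt_lim_div (fct_cte 1) sqrt y 0 _ (derivable_pt_lim_const 1 y)
                  (derivable_pt_lim_sqrt y Hy) ltac:(lra)).
  replace (-1/2 * (/ sqrt y * (/ sqrt y * / sqrt y))) with
     ((0 * sqrt y - / (2 * sqrt y) * fct_cte 1 y) / (sqrt y)²).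
  - intros eps He. destruct (H eps He) as [d Hd]. exists d. intros h Hh Hl.
    specialize (Hd h Hh Hl). unfold div_fct, fct_cte in Hd. unfold Rdiv in Hd.
    rewrite !Rmult_1_l in Hd. exact Hd.
  - unfold fct_cte, Rsqr. field. lra.
Qed.

Lemma deriv_ev N i e x : okx N e x ->
  derivable_pt_lim (fun t => ev e (vadd x (vscale t (ebasis i)))) 0 (ev (dx i e) x).
Proof.
  induction e as [c|k|a IHa b IHb|a IHa b IHb|a IHa]; simpl; intros Hok.
  - apply (derivable_pt_lim_const c 0).
  - unfold vadd, vscale, ebasis. apply dlin.
  - destruct Hok as [Ha Hb].
    apply (derivable_pt_lim_plus (fun t => ev a (vadd x (vscale t (ebasis i))))
       (fun t => ev b (vadd x (vscale t (ebasis i))))); auto.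
  - destruct Hok as [Ha Hb].
    assert (H := derivable_pt_lim_mult (fun t => ev a (vadd x (vscale t (ebasis i))))
       (fun t => ev b (vadd x (vscale t (ebasis i)))) 0 _ _ (IHa Ha) (IHb Hb)).
    cbv beta in H. rewrite line0 in H. exact H.
  - destruct Hok as [Ha Hp].
    assert (H := derivable_pt_lim_comp (fun t => ev a (vadd x (vscale t (ebasis i))))
       (fun t => / sqrt t) 0 _ (-1/2 * (/ sqrt (ev a x) * (/ sqrt (ev a x) * / sqrt (ev a x)))) (IHa Ha)).
    cbv beta in H. rewrite line0 in H. specialize (H (dinvsqrt _ Hp)).
    replace (-1 / 2 * ev (dx i a) x * (/ sqrt (ev a x) * (/ sqrt (ev a x) * / sqrt (ev a x))))
      with (-1 / 2 * (/ sqrt (ev a x) * (/ sqrt (ev a x) * / sqrt (ev a x))) * ev (dx i a) x) by ring.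
    exact H.
Qed.

Definition contx (N : nat) (f : vec -> R) (x : vec) : Prop :=
  forall e, e > 0 -> exists d, d > 0 /\ forall y, vdist N y x < d -> Rabs (f y - f x) < e.

Lemma sumsq_ge N (f : nat -> R) k : (k < N)%nat -> f k * f k <= sumN N (fun j => f j * f j).
Proof.
  induction N as [|N IH]; intros Hk; simpl; [lia|].
  assert (Hnn : forall M, 0 <= sumN M (fun j => f j * f j)).
  { induction M; simpl; [lra|]. assert (0 <= f M * f M) by apply Rle_0_sqr. lra. }
  destruct (Nat.eq_dec k N) as [->|Hne].
  - specialize (Hnn N). lra.
  - assert (f N * f N >= 0) by (apply Rle_ge, Rle_0_sqr). specialize (IH ltac:(lia)). lra.
Qed.

Lemma coord_le N (x y : vec) k : (k < N)%nat -> Rabs (y k - x k) <= vdist N y x.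
Proof.
  intros Hk. unfold vdist, vnorm, dot, vsub.
  rewrite <- sqrt_Rsqr_abs. apply sqrt_le_1_alt. unfold Rsqr.
  apply (sumsq_ge N (fun j => y j - x j)); auto.
Qed.

Lemma contx_const N c x : contx N (fun _ => c) x.
Proof. intros e He. exists 1. split; [lra|]. intros y _. unfold Rminus; rewrite Rplus_opp_r, Rabs_R0; lra. Qed.

Lemma contx_var N k x : (k < N)%nat -> contx N (fun y => y k) x.
Proof.
  intros Hk e He. exists e. split; auto. intros y Hy.
  eapply Rle_lt_trans; [apply coord_le; eauto|auto].
Qed.

Lemma contx_plus N f g x : contx N f x -> contx N g x -> contx N (fun y => f y + g y) x.
Proof.
  intros Hf Hg e He. destruct (Hf (e/2) ltac:(lra)) as [d1 [Hd1 H1]].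
  destruct (Hg (e/2) ltac:(lra)) as [d2 [Hd2 H2]].
  exists (Rmin d1 d2). split; [apply Rmin_pos; auto|].
  intros y Hy. specialize (H1 y (Rlt_le_trans _ _ _ Hy (Rmin_l _ _))).
  specialize (H2 y (Rlt_le_trans _ _ _ Hy (Rmin_r _ _))).
  replace (f y + g y - (f x + g x)) with ((f y - f x) + (g y - g x)) by ring.
  eapply Rle_lt_trans; [apply Rabs_triang|lra].
Qed.

Lemma contx_comp N (h : R -> R) f x : continuity_pt h (f x) -> contx N f x -> contx N (fun y => h (f y)) x.
Proof.
  intros Hh Hf e He. destruct (Hh e He) as [a [Ha Hha]].
  destruct (Hf a Ha) as [d [Hd Hfd]]. exists d. split; auto.
  intros y Hy. destruct (Req_dec (f y) (f x)) as [E|E].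
  - rewrite E. unfold Rminus; rewrite Rplus_opp_r, Rabs_R0; lra.
  - apply (Hha (f y)). split. split. exact I. auto. apply Hfd; auto.
Qed.

Lemma cpt_id y : continuity_pt (fun t => t) y.
Proof. apply derivable_continuous_pt. exists 1. apply derivable_pt_lim_id. Qed.

Lemma cpt_scal c y : continuity_pt (fun t => c * t) y.
Proof. apply (continuity_pt_mult (fun _ => c) (fun t => t)); [apply continuity_pt_const; intros ? ?; reflexivity|apply cpt_id]. Qed.

Lemma cpt_sq y : continuity_pt (fun t => t * t) y.
Proof. apply (continuity_pt_mult (fun t => t) (fun t => t)); apply cpt_id. Qed.

Lemma contx_ext N f g x : (forall y, f y = g y) -> contx N f x -> contx N g x.
Proof. intros E H e He. destruct (H e He) as [d [Hd H']]. exists d; split; auto. intros y Hy. rewrite <- !E; auto. Qed.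

Lemma contx_mult N f g x : contx N f x -> contx N g x -> contx N (fun y => f y * g y) x.
Proof.
  intros Hf Hg.
  apply (contx_ext N (fun y => / 4 * ((f y + g y) * (f y + g y) + (-1) * ((f y + (-1) * g y) * (f y + (-1) * g y))))).
  { intros y; field. }
  apply (contx_comp N (fun t => / 4 * t)); [apply cpt_scal|].
  apply contx_plus.
  - apply (contx_comp N (fun t => t * t) (fun y => f y + g y)); [apply cpt_sq|]. apply contx_plus; auto.
  - apply (contx_comp N (fun t => (-1) * t)); [apply cpt_scal|].
    apply (contx_comp N (fun t => t * t) (fun y => f y + (-1) * g y)); [apply cpt_sq|].
    apply contx_plus; auto. apply (contx_comp N (fun t => (-1) * t)); [apply cpt_scal|auto].
Qed.

Lemma contx_ev N e x : okx N e x -> contx N (ev e) x.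
Proof.
  induction e as [c|k|a IHa b IHb|a IHa b IHb|a IHa]; simpl; intros Hok.
  - apply contx_const.
  - apply contx_var; auto.
  - destruct Hok; apply contx_plus; auto.
  - destruct Hok; apply contx_mult; auto.
  - destruct Hok as [Ha Hp].
    apply (contx_comp N (fun t => / sqrt t) (ev a)); auto.
    apply (continuity_pt_inv sqrt). apply sqrt_continuity_pt; auto.
    apply Rgt_not_eq, sqrt_lt_R0; auto.
Qed.

Lemma smooth_ex N (U : vec -> Prop) (E : nat -> ex) :
  (forall k x, (k < N)%nat -> U x -> okx N (E k) x) ->
  smooth_vmap_on N U (fun x k => ev (E k) x).
Proof.
  intros Hok k Hk. exists (fun l x => ev (dxl l (E k)) x). split; [|split].
  - intros x _; reflexivity.
  - intros l i x Hi Hx. simpl. apply (deriv_ev N). apply okx_dxl; auto.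
  - intros l x Hx e He. destruct (contx_ev N (dxl l (E k)) x (okx_dxl _ _ _ _ (Hok k x Hk Hx)) e He)
      as [d [Hd H]]. exists d. split; auto.
Qed.


Fixpoint sumE (N : nat) (F : nat -> ex) : ex :=
  match N with O => EC 0 | S N' => EA (sumE N' F) (F N') end.

Lemma ev_sumE N F x : ev (sumE N F) x = sumN N (fun j => ev (F j) x).
Proof. induction N; simpl; auto. rewrite IHN; auto. Qed.

Lemma okx_sumE M N F x : (forall j, (j < N)%nat -> okx M (F j) x) -> okx M (sumE N F) x.
Proof. induction N; simpl; auto. intros H; split; auto. Qed.

Lemma sumN_quad N (x y : vec) a b : sumN N (fun j => (a * x j + b * y j) * (a * x j + b * y j)) =
  a * a * dot N x x + 2 * a * b * dot N x y + b * b * dot N y y.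
Proof. induction N; unfold dot in *; simpl; [ring|]. rewrite IHN; ring. Qed.

Lemma sumN_lin N (x y z : vec) a b : sumN N (fun j => z j * (a * x j + b * y j)) =
  a * dot N z x + b * dot N z y.
Proof. induction N; unfold dot in *; simpl; [ring|]. rewrite IHN; ring. Qed.

Lemma dot_sym N x y : dot N x y = dot N y x.
Proof. unfold dot; apply sumN_ext; intros; ring. Qed.

Lemma dot_ext N x x' y y' : veq N x x' -> veq N y y' -> dot N x y = dot N x' y'.
Proof. intros H1 H2; unfold dot; apply sumN_ext; intros k Hk; rewrite H1, H2; auto. Qed.

Lemma sumN_nonneg N f : (forall k, (k < N)%nat -> 0 <= f k) -> 0 <= sumN N f.
Proof. induction N; simpl; intros H; [lra|]. assert (0 <= f N) by (apply H; lia). assert (0 <= sumN N f) by (apply IHN; intros; apply H; lia). lra. Qed.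

Lemma dot_pos_ex N (z : vec) : dot N z z > 0 -> exists k, (k < N)%nat /\ z k <> 0.
Proof.
  induction N; unfold dot; simpl; intros H; [lra|].
  destruct (Req_dec (z N) 0) as [E|E].
  - rewrite E in H. destruct IHN as [k [Hk Hz]]; [unfold dot; lra|]. exists k; split; auto.
  - exists N; split; auto.
Qed.

Lemma dot_zero N (z : vec) : dot N z z = 0 -> forall k, (k < N)%nat -> z k = 0.
Proof.
  intros H k Hk. assert (H1 := sumsq_ge N z k Hk). unfold dot in H. rewrite H in H1.
  assert (0 <= z k * z k) by apply Rle_0_sqr. nra.
Qed.

Lemma abs_dot_le N (P z : vec) B : dot N P P = 1 -> (forall k, (k < N)%nat -> Rabs (z k) <= B) ->
  Rabs (dot N P z) <= INR N * B.
Proof.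
  intros HP Hz. assert (HPk : forall k, (k < N)%nat -> Rabs (P k) <= 1).
  { intros k Hk. assert (H1 := sumsq_ge N P k Hk). unfold dot in HP. rewrite HP in H1.
    apply Rabs_le. nra. }
  clear HP. unfold dot. induction N as [|N IH]; simpl.
  - rewrite Rabs_R0; lra.
  - try rewrite S_INR. eapply Rle_trans; [apply Rabs_triang|].
    assert (A := IH ltac:(intros; apply Hz; lia) ltac:(intros; apply HPk; lia)).
    rewrite Rabs_mult. assert (B0 : 0 <= B).
    { eapply Rle_trans; [apply Rabs_pos|apply (Hz N); lia]. }
    assert (Rabs (P N) * Rabs (z N) <= 1 * B).
    { apply Rmult_le_compat; try apply Rabs_pos; [apply HPk|apply Hz]; lia. }
    replace (match N with | 0%nat => 1 | S _ => INR N + 1 end) with (INR N + 1) by (destruct N; simpl; ring).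
    lra.
Qed.

Definition TP (P : vec) j := EA (EV j) (EC (P j)).
Definition S1 N P := sumE N (fun j => EM (TP P j) (TP P j)).
Definition E1 N P k := EM (TP P k) (EIS (S1 N P)).
Definition Dt N (P : vec) := sumE N (fun j => EM (EC (P j)) (EV j)).
Definition F1 N P k := EA (EM (EM (EC 2) (Dt N P)) (EV k)) (EC (- P k)).
Definition TQ (P : vec) j := EA (EC (P j)) (EM (EC (-1)) (EV j)).
Definition S2 N P := sumE N (fun j => EM (TQ P j) (TQ P j)).
Definition E2 N P sg k := EM (EC sg) (EM (TQ P k) (EIS (S2 N P))).
Definition F2 N P k := EA (EC (P k)) (EM (EM (EC (-2)) (Dt N P)) (EV k)).

Definition psi1 N P x k := ev (E1 N P k) x.
Definition phi1 N P y k := ev (F1 N P k) y.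
Definition psi2 N P sg x k := ev (E2 N P sg k) x.
Definition phi2 N P y k := ev (F2 N P k) y.

Lemma ev_S1 N P x : ev (S1 N P) x = dot N x x + 2 * dot N x P + dot N P P.
Proof.
  unfold S1; rewrite ev_sumE. simpl.
  rewrite (sumN_ext _ _ (fun j => (1 * x j + 1 * P j) * (1 * x j + 1 * P j))) by (intros; ring).
  rewrite sumN_quad; ring.
Qed.

Lemma ev_S2 N P x : ev (S2 N P) x = dot N P P - 2 * dot N P x + dot N x x.
Proof.
  unfold S2; rewrite ev_sumE. simpl.
  rewrite (sumN_ext _ _ (fun j => (1 * P j + (-1) * x j) * (1 * P j + (-1) * x j))) by (intros; ring).
  rewrite sumN_quad; ring.
Qed.

Lemma ev_Dt N P y : ev (Dt N P) y = dot N P y.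
Proof. unfold Dt; rewrite ev_sumE; reflexivity. Qed.

Lemma psi1_eq N P x k : psi1 N P x k = (x k + P k) * / sqrt (ev (S1 N P) x).
Proof. reflexivity. Qed.
Lemma phi1_eq N P y k : phi1 N P y k = 2 * dot N P y * y k + - P k.
Proof. unfold phi1, F1; simpl; rewrite ev_Dt; ring. Qed.
Lemma psi2_eq N P sg x k : psi2 N P sg x k = sg * ((P k + -1 * x k) * / sqrt (ev (S2 N P) x)).
Proof. reflexivity. Qed.
Lemma phi2_eq N P y k : phi2 N P y k = P k + -2 * dot N P y * y k.
Proof. unfold phi2, F2; simpl; rewrite ev_Dt; ring. Qed.

Lemma L1b N P x : dot N P P = 1 -> on_sphere N x -> ev (S1 N P) x > 0 ->
  on_sphere N (psi1 N P x) /\ veq N (phi1 N P (psi1 N P x)) x.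
Proof.
  unfold on_sphere. intros HP Hx Hm.
  set (m := ev (S1 N P) x) in *.
  assert (Em : m = 2 + 2 * dot N x P) by (unfold m; rewrite ev_S1, Hx, HP; ring).
  set (s := sqrt m). assert (Hs : s * s = m) by (apply sqrt_sqrt; lra).
  assert (Hs0 : s > 0) by (apply sqrt_lt_R0; lra).
  assert (Exp : dot N x P = (s * s - 2) / 2) by (rewrite Hs; lra).
  set (q := / s).
  assert (Hpsi : forall k, psi1 N P x k = q * x k + q * P k) by (intros; rewrite psi1_eq; fold m s q; ring).
  split.
  - unfold dot. rewrite (sumN_ext _ _ (fun j => (q * x j + q * P j) * (q * x j + q * P j))).
    + rewrite sumN_quad. fold (dot N x x). rewrite Hx, HP, Exp. unfold q. field. lra.
    + intros; rewrite Hpsi; auto.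
  - intros k Hk. rewrite phi1_eq, Hpsi.
    assert (Hd : dot N P (psi1 N P x) = q * dot N P x + q * dot N P P).
    { unfold dot at 1. rewrite (sumN_ext _ _ (fun j => P j * (q * x j + q * P j))).
      + apply sumN_lin. + intros; rewrite Hpsi; auto. }
    rewrite Hd, HP, (dot_sym N P x), Exp. unfold q. field. lra.
Qed.

Lemma L1c N P y : dot N P P = 1 -> on_sphere N y -> dot N P y > 0 ->
  on_sphere N (phi1 N P y) /\ veq N (psi1 N P (phi1 N P y)) y.
Proof.
  unfold on_sphere. intros HP Hy Hc. set (c := dot N P y) in *.
  assert (Hphi : forall k, phi1 N P y k = (2 * c) * y k + (-1) * P k) by (intros; rewrite phi1_eq; fold c; ring).
  split.
  - unfold dot. rewrite (sumN_ext _ _ (fun j => ((2 * c) * y j + (-1) * P j) * ((2 * c) * y j + (-1) * P j))).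
    + rewrite sumN_quad. fold (dot N y y). rewrite Hy, HP, (dot_sym N y P). fold c. ring.
    + intros; rewrite Hphi; auto.
  - intros k Hk. rewrite psi1_eq.
    assert (Hm : ev (S1 N P) (phi1 N P y) = (2 * c) * (2 * c)).
    { unfold S1; rewrite ev_sumE. simpl.
      rewrite (sumN_ext _ _ (fun j => ((2 * c) * y j + 0 * P j) * ((2 * c) * y j + 0 * P j))).
      - rewrite sumN_quad. fold (dot N y y). rewrite Hy. ring.
      - intros j Hj. rewrite Hphi. ring. }
    rewrite Hm, sqrt_square by lra. rewrite Hphi. field. lra.
Qed.

Lemma L1d N P (v : vec) c (w : vec) : dot N P P = 1 -> dot N v v = 1 -> dot N P v = c -> c * c < 1 ->
  (forall k, (k < N)%nat -> w k = P k - 2 * c * v k) ->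
  veq N (psi1 N P w) (vscale (/ sqrt (1 - c ^ 2)) (vsub P (vscale c v))).
Proof.
  intros HP Hv Hc Hc1 Hw k Hk.
  set (t := sqrt (1 - c ^ 2)).
  assert (Htt : t * t = 1 - c * c) by (unfold t; rewrite sqrt_sqrt; [ring|nra]).
  assert (Ht : t > 0) by (unfold t; apply sqrt_lt_R0; nra).
  assert (Hm : ev (S1 N P) w = (2 * t) * (2 * t)).
  { unfold S1; rewrite ev_sumE. cbn [ev].
    rewrite (sumN_ext _ _ (fun j => (2 * P j + (-2 * c) * v j) * (2 * P j + (-2 * c) * v j))).
    - rewrite sumN_quad. rewrite HP, Hv, Hc.
      replace ((2 * t) * (2 * t)) with (4 * (t * t)) by ring. rewrite Htt. ring.
    - intros j Hj. unfold TP; simpl. rewrite Hw; auto. ring. }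
  rewrite psi1_eq, Hm, sqrt_square by lra. rewrite Hw; auto.
  unfold vscale, vsub. fold t. field. lra.
Qed.

Lemma L2b N P sg x : dot N P P = 1 -> sg * sg = 1 -> on_sphere N x -> ev (S2 N P) x > 0 ->
  on_sphere N (psi2 N P sg x) /\ veq N (phi2 N P (psi2 N P sg x)) x.
Proof.
  unfold on_sphere. intros HP Hsg Hx Hm.
  set (m := ev (S2 N P) x) in *.
  assert (Em : m = 2 - 2 * dot N P x) by (unfold m; rewrite ev_S2, Hx, HP; ring).
  set (s := sqrt m). assert (Hs : s * s = m) by (apply sqrt_sqrt; lra).
  assert (Hs0 : s > 0) by (apply sqrt_lt_R0; lra).
  assert (Exp : dot N P x = (2 - s * s) / 2) by (rewrite Hs; lra).
  set (q := / s).
  assert (Hpsi : forall k, psi2 N P sg x k = (sg * q) * P k + (- sg * q) * x k)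
    by (intros; rewrite psi2_eq; fold m s q; ring).
  split.
  - unfold dot. rewrite (sumN_ext _ _ (fun j => ((sg * q) * P j + (- sg * q) * x j) * ((sg * q) * P j + (- sg * q) * x j))).
    + rewrite sumN_quad. fold (dot N x x). rewrite Hx, HP, Exp.
      replace (sg * q * (sg * q)) with (sg * sg * (q * q)) by ring.
      replace (- sg * q * (- sg * q)) with (sg * sg * (q * q)) by ring.
      replace (2 * (sg * q) * (- sg * q)) with (-2 * (sg * sg) * (q * q)) by ring.
      rewrite Hsg. unfold q. field. lra.
    + intros; rewrite Hpsi; auto.
  - intros k Hk. rewrite phi2_eq, Hpsi.
    assert (Hd : dot N P (psi2 N P sg x) = (sg * q) * dot N P P + (- sg * q) * dot N P x).
    { unfold dot at 1. rewrite (sumN_ext _ _ (fun j => P j * ((sg * q) * P j + (- sg * q) * x j))).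
      + apply sumN_lin. + intros; rewrite Hpsi; auto. }
    rewrite Hd, HP, Exp.
    replace (-2 * (sg * q * 1 + - sg * q * ((2 - s * s) / 2)) * (sg * q * P k + - sg * q * x k))
      with (-2 * (sg * sg) * (q * q) * (1 - (2 - s * s) / 2) * (P k - x k)) by ring.
    rewrite Hsg. unfold q. field. lra.
Qed.

Lemma L2key N P sg (v : vec) c (w : vec) : sg * sg = 1 -> dot N v v = 1 -> sg * c > 0 ->
  (forall k, (k < N)%nat -> w k = P k - 2 * c * v k) ->
  veq N (psi2 N P sg w) v.
Proof.
  intros Hsg Hv Hc Hw k Hk.
  assert (Hm : ev (S2 N P) w = (2 * sg * c) * (2 * sg * c)).
  { unfold S2; rewrite ev_sumE. simpl.
    rewrite (sumN_ext _ _ (fun j => ((2 * c) * v j + 0 * P j) * ((2 * c) * v j + 0 * P j))).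
    - rewrite sumN_quad. rewrite Hv.
      replace (2 * sg * c * (2 * sg * c)) with (4 * (sg * sg) * c * c) by ring. rewrite Hsg. ring.
    - intros j Hj. rewrite Hw; auto. ring. }
  assert (Hs0 : sg <> 0) by (intro E; rewrite E in Hc; lra).
  assert (Hc0 : c <> 0) by (intro E; rewrite E in Hc; lra).
  rewrite psi2_eq, Hm, sqrt_square by nra. rewrite Hw; auto.
  field. auto.
Qed.

Lemma L2c N P y : dot N P P = 1 -> on_sphere N y -> on_sphere N (phi2 N P y).
Proof.
  unfold on_sphere. intros HP Hy. set (c := dot N P y).
  unfold dot at 1. rewrite (sumN_ext _ _ (fun j => (1 * P j + (-2 * c) * y j) * (1 * P j + (-2 * c) * y j))).
  - rewrite sumN_quad. fold (dot N y y). rewrite HP, Hy. fold c. ring.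
  - intros; rewrite phi2_eq; fold c; ring.
Qed.


Lemma veq_sym N x y : veq N x y -> veq N y x.
Proof. intros H k Hk; symmetry; auto. Qed.

Lemma near_bound N (P b y : vec) r : dot N P P = 1 -> vdist N y b < r ->
  Rabs (dot N P y - dot N P b) <= INR N * r.
Proof.
  intros HP Hy.
  replace (dot N P y - dot N P b) with (dot N P (vsub y b)).
  - apply abs_dot_le; auto. intros k Hk. unfold vsub.
    left. eapply Rle_lt_trans; [apply coord_le; eauto|auto].
  - unfold dot. rewrite (sumN_ext _ _ (fun j => P j * (1 * y j + (-1) * b j))).
    + rewrite sumN_lin. unfold dot; ring.
    + intros; unfold vsub; ring.
Qed.

Lemma S1_ge N P x k : (k < N)%nat -> (x k + P k) * (x k + P k) <= ev (S1 N P) x.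
Proof. intros Hk. unfold S1; rewrite ev_sumE. apply (sumsq_ge N (fun j => x j + P j)); auto. Qed.

Lemma S2_ge N P x k : (k < N)%nat -> (P k + -1 * x k) * (P k + -1 * x k) <= ev (S2 N P) x.
Proof. intros Hk. unfold S2; rewrite ev_sumE. apply (sumsq_ge N (fun j => P j + -1 * x j)); auto. Qed.

Lemma ok_E1 N P k x : (k < N)%nat -> ev (S1 N P) x > 0 -> okx N (E1 N P k) x.
Proof.
  intros Hk Hp. simpl. split; [split; auto|split; auto].
  unfold S1. apply okx_sumE. intros j Hj. simpl. tauto.
Qed.

Lemma ok_F1 N P k y : (k < N)%nat -> okx N (F1 N P k) y.
Proof.
  intros Hk. simpl. split; auto. split; auto. split; auto.
  unfold Dt. apply okx_sumE. intros j Hj. simpl. tauto.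
Qed.

Lemma ok_E2 N P sg k x : (k < N)%nat -> ev (S2 N P) x > 0 -> okx N (E2 N P sg k) x.
Proof.
  intros Hk Hp. simpl. split; auto. split; [split; auto|split; auto].
  unfold S2. apply okx_sumE. intros j Hj. simpl. tauto.
Qed.

Lemma ok_F2 N P k y : (k < N)%nat -> okx N (F2 N P k) y.
Proof.
  intros Hk. simpl. split; auto. split; auto. split; auto.
  unfold Dt. apply okx_sumE. intros j Hj. simpl. tauto.
Qed.

Definition FLprop (n : nat) := forall (U : nat -> vec),
  (forall i j, (i <= n)%nat -> (j <= n)%nat -> dot (S n) (U i) (U j) = if Nat.eqb i j then 1 else 0) ->
  det (S n) (fun r c => U c r) = 1 ->
  forall k, (k <= n)%nat -> U n k = (-1) ^ (k + n) * det n (fun r c => U c (if Nat.ltb r k then r else S r)).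

Lemma part1 n I gamma u kappa (P : vec) s0 (g : R -> R) :
  Iopen I -> spherical_frame n I gamma u kappa -> on_sphere (S n) P -> I s0 ->
  continuity_pt g s0 -> (forall s, I s -> g s = dot (S n) P (u n s)) ->
  (~ veq (S n) P (u n s0) /\ ~ veq (S n) P (vopp (u n s0))) ->
     (exists eps, eps > 0 /\ forall s, I s -> Rabs (s - s0) < eps ->
         dot (S n) P (u n s) <> 1 /\ dot (S n) P (u n s) <> -1) /\
     L_equiv (S n) I s0 (orthotomic (S n) (u n) P) (pedal (S n) (u n) P).
Proof.
  intros HI Hfr HP Hs0 Hg Hgu [Hn1 Hn2].
  unfold on_sphere in HP.
  destruct Hfr as [_ [_ [_ [_ Horth]]]].
  assert (Hun : forall s, I s -> dot (S n) (u n s) (u n s) = 1).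
  { intros s Hs. destruct (Horth s Hs) as [Ho _]. rewrite Ho; auto. rewrite Nat.eqb_refl; auto. }
  set (N := S n) in *.
  set (u0 := u n s0). set (c0 := dot N P u0).
  assert (Hu0 : dot N u0 u0 = 1) by (apply Hun; auto).
  assert (Hz : dot N (fun j => 1 * P j + (- c0) * u0 j) (fun j => 1 * P j + (- c0) * u0 j) = 1 - c0 * c0).
  { unfold dot at 1. rewrite sumN_quad. rewrite HP, Hu0. fold c0. ring. }
  assert (Hc0 : c0 * c0 < 1).
  { assert (Hnn : 0 <= dot N (fun j => 1 * P j + (- c0) * u0 j) (fun j => 1 * P j + (- c0) * u0 j)).
    { apply sumN_nonneg. intros; apply Rle_0_sqr. }
    destruct (Rle_lt_or_eq_dec 0 _ Hnn) as [Hlt|Heq]; [lra|].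
    exfalso. assert (Hzero := dot_zero N _ (eq_sym Heq)).
    assert (Hcc : c0 * c0 = 1) by lra.
    assert (Hcase : c0 = 1 \/ c0 = -1) by (destruct (Rle_or_lt 0 c0); [left|right]; nra).
    destruct Hcase as [E|E].
    - apply Hn1. intros k Hk. specialize (Hzero k Hk). simpl in Hzero. rewrite E in Hzero. fold u0. lra.
    - apply Hn2. intros k Hk. specialize (Hzero k Hk). simpl in Hzero. rewrite E in Hzero.
      unfold vopp, vscale. fold u0. lra. }
  assert (Habs0 : Rabs c0 < 1) by (apply Rabs_def1; nra).
  destruct (cont_eps g s0 Hg ((1 - Rabs c0) / 2) ltac:(lra)) as [d [Hd Hgd]].
  assert (Hnear : forall s, I s -> Rabs (s - s0) < d -> dot N P (u n s) * dot N P (u n s) < 1).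
  { intros s Hs Hss. specialize (Hgd s Hss). rewrite !Hgu in Hgd; auto. fold u0 c0 in Hgd.
    assert (Rabs (dot N P (u n s)) < 1).
    { replace (dot N P (u n s)) with (c0 + (dot N P (u n s) - c0)) by ring.
      eapply Rle_lt_trans; [apply Rabs_triang|]. lra. }
    assert (Habs := Rabs_def2 _ _ H). nra. }
  split.
  { exists d. split; auto. intros s Hs Hss. specialize (Hnear s Hs Hss). split; intro E; rewrite E in Hnear; lra. }
  set (a := orthotomic N (u n) P s0).
  set (b := pedal N (u n) P s0).
  assert (Ha : forall k, (k < N)%nat -> a k = P k - 2 * c0 * u0 k) by (intros; reflexivity).
  set (t := sqrt (1 - c0 ^ 2)).
  assert (Htt : t * t = 1 - c0 * c0) by (unfold t; rewrite sqrt_sqrt; [ring|nra]).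
  assert (Ht : t > 0) by (unfold t; apply sqrt_lt_R0; nra).
  assert (Hap : dot N (vadd a P) (vadd a P) > 0).
  { unfold dot. rewrite (sumN_ext _ _ (fun j => (2 * P j + (-2 * c0) * u0 j) * (2 * P j + (-2 * c0) * u0 j))).
    - rewrite sumN_quad, HP, Hu0. fold c0. nra.
    - intros j Hj. unfold vadd. rewrite Ha; auto. ring. }
  destruct (dot_pos_ex N _ Hap) as [k0 [Hk0 Hak0]].
  set (r1 := Rabs (vadd a P k0)).
  assert (Hr1 : r1 > 0) by (apply Rabs_pos_lt; auto).
  assert (Hball1 : forall x, ball N a r1 x -> ev (S1 N P) x > 0).
  { intros x Hx. unfold ball in Hx.
    assert (Hc := coord_le N a x k0 Hk0).
    assert (Hne : x k0 + P k0 <> 0).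
    { intro E. unfold r1, vadd in Hx.
      replace (x k0 - a k0) with (- (a k0 + P k0)) in Hc by lra.
      rewrite Rabs_Ropp in Hc. lra. }
    assert (H1 := S1_ge N P x k0 Hk0).
    assert (0 < (x k0 + P k0) * (x k0 + P k0)) by (apply Rsqr_pos_lt; auto). lra. }
  assert (HPb : dot N P b = t).
  { unfold b, pedal. fold u0 c0 t. unfold dot at 1.
    rewrite (sumN_ext _ _ (fun j => P j * ((/ t) * P j + (- (/ t) * c0) * u0 j))).
    - rewrite sumN_lin. fold c0. rewrite HP.
      apply (Rmult_eq_reg_r t); [|lra]. field_simplify; [|lra]. nra.
    - intros j Hj. unfold vscale, vsub. ring. }
  set (r2 := t / (INR N + 1)).
  assert (HN0 : 0 <= INR N) by apply pos_INR.
  assert (Hr2 : r2 > 0) by (unfold r2; apply Rdiv_lt_0_compat; lra).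
  assert (HNr2 : INR N * r2 < t).
  { unfold r2. apply (Rmult_lt_reg_r (INR N + 1)); [lra|]. field_simplify; [|lra]. nra. }
  assert (Hball2 : forall y, ball N b r2 y -> dot N P y > 0).
  { intros y Hy. unfold ball in Hy. assert (Hb := near_bound N P b y r2 HP Hy).
    rewrite HPb in Hb. assert (Hb' := Rabs_def2 _ _ (Rle_lt_trans _ _ _ Hb HNr2)). lra. }
  exists (fun x k => ev (E1 N P k) x). split.
  - exists (fun y k => ev (F1 N P k) y), r1, r2.
    split; [auto|]. split; [auto|].
    split; [apply smooth_ex; intros k x Hk Hx; apply ok_E1; auto|].
    split; [apply smooth_ex; intros k y Hk Hy; apply ok_F1; auto|].
    split; [|split].
    + apply (L1d N P u0 c0 a HP Hu0 eq_refl Hc0 Ha).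
    + intros x Hx Hb1. apply (L1b N P x HP Hx (Hball1 x Hb1)).
    + intros y Hy Hb2. apply (L1c N P y HP Hy (Hball2 y Hb2)).
  - exists d. split; auto. intros s Hs Hss. apply veq_sym.
    apply (L1d N P (u n s) (dot N P (u n s)) _ HP (Hun s Hs) eq_refl (Hnear s Hs Hss)).
    intros; reflexivity.
Qed.

Lemma part2 n I gamma u kappa (P : vec) s0 (g : R -> R) :
  Iopen I -> spherical_frame n I gamma u kappa -> on_sphere (S n) P -> I s0 ->
  continuity_pt g s0 -> (forall s, I s -> g s = dot (S n) P (u n s)) ->
  (veq (S n) P (u n s0) \/ veq (S n) P (vopp (u n s0))) ->
     L_equiv (S n) I s0 (orthotomic (S n) (u n) P) (u n).
Proof.
  intros HI Hfr HP Hs0 Hg Hgu Hcase.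
  unfold on_sphere in HP.
  destruct Hfr as [_ [_ [_ [_ Horth]]]].
  assert (Hun : forall s, I s -> dot (S n) (u n s) (u n s) = 1).
  { intros s Hs. destruct (Horth s Hs) as [Ho _]. rewrite Ho; auto. rewrite Nat.eqb_refl; auto. }
  set (N := S n) in *.
  set (u0 := u n s0). set (c0 := dot N P u0).
  assert (Hu0 : dot N u0 u0 = 1) by (apply Hun; auto).
  assert (Hsg : exists sg, (sg = 1 \/ sg = -1) /\ forall k, (k < N)%nat -> P k = sg * u0 k).
  { destruct Hcase as [H|H]; [exists 1|exists (-1)]; split; auto; intros k Hk; rewrite H; auto;
    unfold vopp, vscale, u0; ring. }
  destruct Hsg as [sg [Hsg1 HPu]].
  assert (Hsg2 : sg * sg = 1) by (destruct Hsg1; subst; ring).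
  assert (Hc0 : c0 = sg).
  { unfold c0, dot. rewrite (sumN_ext _ _ (fun j => u0 j * (sg * u0 j + 0 * u0 j))).
    - rewrite sumN_lin. rewrite Hu0. ring.
    - intros j Hj. rewrite HPu; auto. ring. }
  destruct (cont_eps g s0 Hg (1 / 2) ltac:(lra)) as [d [Hd Hgd]].
  assert (Hnear : forall s, I s -> Rabs (s - s0) < d -> sg * dot N P (u n s) > 0).
  { intros s Hs Hss. specialize (Hgd s Hss). rewrite !Hgu in Hgd; auto. fold u0 c0 in Hgd.
    rewrite Hc0 in Hgd. apply Rabs_def2 in Hgd. destruct Hsg1; subst sg; lra. }
  set (a := orthotomic N (u n) P s0).
  assert (Ha : forall k, (k < N)%nat -> a k = P k - 2 * c0 * u0 k) by (intros; reflexivity).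
  assert (HPpos : dot N P P > 0) by lra.
  destruct (dot_pos_ex N _ HPpos) as [k0 [Hk0 HPk0]].
  set (r1 := Rabs (P k0)).
  assert (Hr1 : r1 > 0) by (apply Rabs_pos_lt; auto).
  assert (Hak0 : a k0 = - P k0).
  { rewrite Ha; auto. rewrite Hc0. rewrite (HPu k0 Hk0) at 1.
    replace (P k0) with (sg * u0 k0) by (symmetry; apply HPu; auto).
    replace (sg * u0 k0 - 2 * sg * u0 k0) with (- (sg * u0 k0)) by ring. ring_simplify.
    destruct Hsg1; subst sg; ring. }
  assert (Hball1 : forall x, ball N a r1 x -> ev (S2 N P) x > 0).
  { intros x Hx. unfold ball in Hx.
    assert (Hc := coord_le N a x k0 Hk0).
    assert (Hne : P k0 + -1 * x k0 <> 0).
    { intro E. assert (Ex : x k0 = P k0) by lra. rewrite Ex, Hak0 in Hc.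
      replace (P k0 - - P k0) with (2 * P k0) in Hc by ring.
      rewrite Rabs_mult, (Rabs_right 2) in Hc by lra. fold r1 in Hc. lra. }
    assert (H1 := S2_ge N P x k0 Hk0).
    assert (0 < (P k0 + -1 * x k0) * (P k0 + -1 * x k0)) by (apply Rsqr_pos_lt; auto). lra. }
  set (r2 := 1 / (INR N + 1)).
  assert (HN0 : 0 <= INR N) by apply pos_INR.
  assert (Hr2 : r2 > 0) by (unfold r2; apply Rdiv_lt_0_compat; lra).
  assert (HNr2 : INR N * r2 < 1).
  { unfold r2. apply (Rmult_lt_reg_r (INR N + 1)); [lra|]. field_simplify; [|lra]. lra. }
  assert (Hball2 : forall y, ball N u0 r2 y -> sg * dot N P y > 0).
  { intros y Hy. unfold ball in Hy. assert (Hb := near_bound N P u0 y r2 HP Hy).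
    fold c0 in Hb. rewrite Hc0 in Hb. assert (Hb' := Rabs_def2 _ _ (Rle_lt_trans _ _ _ Hb HNr2)).
    destruct Hsg1; subst sg; lra. }
  exists (fun x k => ev (E2 N P sg k) x). split.
  - exists (fun y k => ev (F2 N P k) y), r1, r2.
    split; [auto|]. split; [auto|].
    split; [apply smooth_ex; intros k x Hk Hx; apply ok_E2; auto|].
    split; [apply smooth_ex; intros k y Hk Hy; apply ok_F2; auto|].
    split; [|split].
    + apply (L2key N P sg u0 c0 a Hsg2 Hu0); [rewrite Hc0; lra|exact Ha].
    + intros x Hx Hb1. apply (L2b N P sg x HP Hsg2 Hx (Hball1 x Hb1)).
    + intros y Hy Hb2. split; [apply L2c; auto|].
      apply (L2key N P sg y (dot N P y) _ Hsg2 Hy (Hball2 y Hb2)).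
      intros k Hk. change (phi2 N P y k = P k - 2 * dot N P y * y k). rewrite phi2_eq. ring.
  - exists d. split; auto. intros s Hs Hss. apply veq_sym.
    apply (L2key N P sg (u n s) (dot N P (u n s)) _ Hsg2 (Hun s Hs) (Hnear s Hs Hss)).
    intros; reflexivity.
Qed.

Lemma main_core (n : nat) (I : R -> Prop) (gamma : R -> vec)
  (u : nat -> R -> vec) (kappa : nat -> R -> R) (P : vec) (s0 : R) :
  FLprop n ->
  (2 <= n)%nat ->
  is_open_interval I ->
  smooth_curve (S n) I gamma ->
  (forall s, I s -> on_sphere (S n) (gamma s)) ->
  spherical_frame n I gamma u kappa ->
  on_sphere (S n) P ->
  I s0 ->
  ((~ veq (S n) P (u n s0) /\ ~ veq (S n) P (vopp (u n s0))) ->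
     (exists eps, eps > 0 /\ forall s, I s -> Rabs (s - s0) < eps ->
         dot (S n) P (u n s) <> 1 /\ dot (S n) P (u n s) <> -1) /\
     L_equiv (S n) I s0 (orthotomic (S n) (u n) P) (pedal (S n) (u n) P)) /\
  ((veq (S n) P (u n s0) \/ veq (S n) P (vopp (u n s0))) ->
     L_equiv (S n) I s0 (orthotomic (S n) (u n) P) (u n)).
Proof.
  intros FL Hn Hint Hg Hgs Hfr HP Hs0.
  assert (HI : Iopen I) by (destruct Hint as [_ [_ H3]]; exact H3).
  assert (HFL : forall s, I s -> forall k, (k <= n)%nat ->
      u n s k = (-1) ^ (k + n) * det n (fun r c => u c s (if Nat.ltb r k then r else S r))).
  { intros s Hs k Hk. destruct Hfr as [_ [_ [_ [_ Horth]]]].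
    destruct (Horth s Hs) as [Ho Hd].
    apply (FL (fun i => u i s)); auto. }
  destruct (c_cont n I gamma u kappa P s0 Hn HI Hg Hfr Hs0 HFL) as [g [Hgc Hgu]].
  split; intros H.
  - apply (part1 n I gamma u kappa P s0 g); auto.
  - apply (part2 n I gamma u kappa P s0 g); auto.
Qed.


From mathcomp Require Import all_boot all_algebra.
From mathcomp Require Import Rstruct.
Import GRing.Theory.

Section MC.
Local Open Scope ring_scope.

Lemma sumN_big k (f : nat -> R) : sumN k f = \sum_(i < k) f i.
Proof.
elim: k => [|k IH] /=; first by rewrite big_ord0.
by rewrite big_ord_recr /= IH.
Qed.

Lemma pow_m1 j : Rpow_def.pow (-1)%R j = (-1) ^+ j.
Proof. by rewrite RpowE. Qed.

Lemma detS k (M : nat -> nat -> R) : det k.+1 M = sumN k.+1 (fun j =>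
        (Rpow_def.pow (-1)%R j) * M O j * det k (fun r c => M (S r) (if Nat.ltb c j then c else S c))).
Proof. by []. Qed.

Lemma det_big k (M : nat -> nat -> R) :
  det k M = \det (\matrix_(i < k, j < k) M i j).
Proof.
elim: k M => [|k IH] M; first by rewrite det_mx00.
rewrite detS (expand_det_row _ ord0) sumN_big; apply: eq_bigr => j _.
rewrite IH /cofactor !mxE pow_m1 add0n mulrCA mulrA; congr (_ * \det _).
apply/matrixP => r c; rewrite !mxE /=.
rewrite /bump /=; congr (M _ _).
case: (ltnP c j) => h.
  have -> : Nat.ltb c j = true by apply/Nat.ltb_lt/ltP.
  by [].
have -> : Nat.ltb c j = false by apply/Nat.ltb_ge/leP.
by rewrite add1n.
Qed.
Lemma frame_last (n : nat) (U : nat -> vec) :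
 (forall i j, le i n -> le j n -> dot (S n) (U i) (U j) = if Nat.eqb i j then 1 else 0) ->
 det (S n) (fun r c => U c r) = 1 ->
 forall k, le k n -> U n k = Rpow_def.pow (-1)%R (k+n) * det n (fun r c => U c (if Nat.ltb r k then r else S r)).
Proof.
move=> Horth Hdet k Hk.
set A : 'M[R]_(S n) := \matrix_(r, c) U c r.
have HA : A^T *m A = 1%:M.
  apply/matrixP => i j; rewrite !mxE.
  transitivity (dot (S n) (U i) (U j)).
    by rewrite /dot sumN_big; apply: eq_bigr => l _; rewrite !mxE.
  rewrite Horth; last 2 first.
  - by apply/leP; rewrite -ltnS.
  - by apply/leP; rewrite -ltnS.
  case: (Nat.eqb_spec i j) => h.
    by rewrite (_ : i == j) //; apply/eqP/val_inj.
  by rewrite (_ : i == j = false) //; apply/negP => /eqP E; apply: h; rewrite E.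
have Hd : \det A = 1.
  rewrite -Hdet det_big; congr (\det _); apply/matrixP => r c; rewrite !mxE //.
have Hadj : \adj A = A^T.
  have := mul_mx_adj A; rewrite Hd => E.
  by rewrite -[\adj A]mul1mx -HA -mulmxA E mulmx1.
have Hk' : (k < n.+1)%N by apply/ltP; lia.
have := congr1 (fun M : 'M[R]_(S n) => M ord_max (Ordinal Hk')) Hadj.
rewrite /= !mxE /cofactor det_big => E.
rewrite /= in E; rewrite -E pow_m1; congr (_ * \det _).
apply/matrixP => r c; rewrite !mxE /= /bump.
have -> : (n <= c)%N = false by rewrite leqNgt ltn_ord.
rewrite add0n; congr (U _ _).
case: (ltnP r k) => h.
  by have -> : Nat.ltb r k = true by apply/Nat.ltb_lt/ltP.
have -> : Nat.ltb r k = false by apply/Nat.ltb_ge/leP.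
by rewrite add1n.
Qed.
End MC.


Open Scope R_scope.

Lemma FL_all n : FLprop n.
Proof. intros U Ho Hd k Hk. apply frame_last; auto. Qed.

Theorem theorem1 (n : nat) (I : R -> Prop) (gamma : R -> vec)
  (u : nat -> R -> vec) (kappa : nat -> R -> R) (P : vec) (s0 : R) :
  (2 <= n)%coq_nat ->
  is_open_interval I ->
  smooth_curve (S n) I gamma ->
  (forall s, I s -> on_sphere (S n) (gamma s)) ->
  spherical_frame n I gamma u kappa ->
  on_sphere (S n) P ->
  I s0 ->
  ((~ veq (S n) P (u n s0) /\ ~ veq (S n) P (vopp (u n s0))) ->
     (exists eps, eps > 0 /\ forall s, I s -> Rabs (s - s0) < eps ->
         dot (S n) P (u n s) <> 1 /\ dot (S n) P (u n s) <> -1) /\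
     L_equiv (S n) I s0 (orthotomic (S n) (u n) P) (pedal (S n) (u n) P)) /\
  ((veq (S n) P (u n s0) \/ veq (S n) P (vopp (u n s0))) ->
     L_equiv (S n) I s0 (orthotomic (S n) (u n) P) (u n)).
Proof.
  intros. apply (main_core n I gamma u kappa P s0); auto. apply FL_all.
Qed.
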